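(* Let $H$ be a divisible group all of whose elements are almost right Engel. Then for any $g,x\in H$ there is a positive integer $n(x,g)$ such that $[[g,{}_nx],g]=1$ for all $n\ge n(x,g)$.
   Context: Commutators: $a^b=b^{-1}ab$, $[a,b]=a^{-1}b^{-1}ab$, and $[a,{}_nb]=[\dots[[a,b],b],\dots,b]$ with $b$ repeated $n$ times. An element $g$ of a group $G$ is almost right Engel if there is a finite set $\mathscr R\subseteq G$ such that for every $x\in G$ there is a positive integer $r(x,g)$ with $[g,{}_nx]\in\mathscr R$ for all $n\ge r(x,g)$. A group $H$ is divisible if for every $h\in H$ and every positive integer $k$ there is $x\in H$ with $x^k=h$. *)

(* Defs.v *)
From Stdlib Require Import List Arith.

Record Group := {
  carrier :> Type;
  gmul : carrier -> carrier -> carrier;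
  ginv : carrier -> carrier;
  gone : carrier;
  gmul_assoc : forall a b c, gmul a (gmul b c) = gmul (gmul a b) c;
  gmul_1l : forall a, gmul gone a = a;
  gmul_1r : forall a, gmul a gone = a;
  gmul_Vl : forall a, gmul (ginv a) a = gone;
  gmul_Vr : forall a, gmul a (ginv a) = gone
}.

Section Ops.
Variable G : Group.

Definition comm (a b : G) : G :=
  gmul G (gmul G (gmul G (ginv G a) (ginv G b)) a) b.

Fixpoint ecomm (a b : G) (n : nat) : G :=
  match n with
  | 0 => a
  | S k => comm (ecomm a b k) b
  end.

Fixpoint gpow (x : G) (k : nat) : G :=
  match k with
  | 0 => gone G
  | S j => gmul G x (gpow x j)
  end.

Definition almost_right_Engel (g : G) : Prop :=
  exists R : list G, forall x : G, exists r : nat, 0 < r /\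
    forall n, r <= n -> In (ecomm g x n) R.

Definition divisible : Prop :=
  forall (h : G) (k : nat), 0 < k -> exists x : G, gpow x k = h.
End Ops.

(* Main.v *)
Require Import Defs.
From Stdlib Require Import List Arith Lia Classical.

Lemma g_cancel_l (G : Group) (a b c : G) : gmul G a b = gmul G a c -> b = c.
Proof.
  intro E. rewrite <- (gmul_1l G b), <- (gmul_1l G c), <- (gmul_Vl G a),
    <- !gmul_assoc, E. reflexivity.
Qed.

Lemma g_inv_unique (G : Group) (a b : G) : gmul G a b = gone G -> b = ginv G a.
Proof.
  intro E. apply (g_cancel_l G a). rewrite E, gmul_Vr. reflexivity.
Qed.

Definition gconj (G : Group) (a y : G) : G := gmul G (gmul G (ginv G y) a) y.

Lemma gconj_mul (G : Group) (a b y : G) :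
  gconj G (gmul G a b) y = gmul G (gconj G a y) (gconj G b y).
Proof.
  unfold gconj. rewrite !gmul_assoc.
  rewrite <- (gmul_assoc G _ y (ginv G y)), gmul_Vr, gmul_1r. reflexivity.
Qed.

Lemma gconj_one (G : Group) (y : G) : gconj G (gone G) y = gone G.
Proof. unfold gconj. rewrite gmul_1r, gmul_Vl. reflexivity. Qed.

Lemma gconj_inv (G : Group) (a y : G) : gconj G (ginv G a) y = ginv G (gconj G a y).
Proof.
  apply g_inv_unique. rewrite <- gconj_mul, gmul_Vr, gconj_one. reflexivity.
Qed.

Lemma gconj_comm (G : Group) (a b y : G) :
  gconj G (comm G a b) y = comm G (gconj G a y) (gconj G b y).
Proof.
  unfold comm. rewrite !gconj_mul, !gconj_inv. reflexivity.
Qed.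

Lemma gconj_ecomm (G : Group) (a b y : G) n :
  gconj G (ecomm G a b n) y = ecomm G (gconj G a y) (gconj G b y) n.
Proof.
  induction n; simpl; [reflexivity|]. rewrite gconj_comm, IHn. reflexivity.
Qed.

Lemma ginv_mul (G : Group) (a b : G) : ginv G (gmul G a b) = gmul G (ginv G b) (ginv G a).
Proof.
  symmetry. apply g_inv_unique.
  rewrite !gmul_assoc, <- (gmul_assoc G a b), gmul_Vr, gmul_1r, gmul_Vr. reflexivity.
Qed.

Lemma gconj_conj (G : Group) (a p q : G) :
  gconj G (gconj G a p) q = gconj G a (gmul G p q).
Proof.
  unfold gconj. rewrite ginv_mul, !gmul_assoc. reflexivity.
Qed.

Lemma gconj_inj (G : Group) (a b y : G) : gconj G a y = gconj G b y -> a = b.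
Proof.
  intro E. assert (E2 : gconj G (gconj G a y) (ginv G y) = gconj G (gconj G b y) (ginv G y))
    by (rewrite E; reflexivity).
  rewrite !gconj_conj, gmul_Vr in E2. unfold gconj in E2.
  rewrite !gmul_1r in E2. assert (I1 : ginv G (gone G) = gone G).
  { symmetry. apply g_inv_unique. apply gmul_1l. }
  rewrite I1, !gmul_1l in E2. exact E2.
Qed.

Lemma gconj_fix_comm (G : Group) (c g : G) : gconj G c g = c -> comm G c g = gone G.
Proof.
  intro E. unfold comm.
  replace (gmul G (gmul G (gmul G (ginv G c) (ginv G g)) c) g)
    with (gmul G (ginv G c) (gconj G c g)).
  - rewrite E, gmul_Vl. reflexivity.
  - unfold gconj. rewrite !gmul_assoc. reflexivity.
Qed.

Lemma gconj_id (G : Group) (g h : G) : gmul G g h = gmul G h g -> gconj G g h = g.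
Proof.
  intro E. unfold gconj. rewrite <- gmul_assoc, E, gmul_assoc, gmul_Vl, gmul_1l. reflexivity.
Qed.

Lemma gpow_add (G : Group) (h : G) a b : gpow G h (a + b) = gmul G (gpow G h a) (gpow G h b).
Proof.
  induction a; simpl. - rewrite gmul_1l. reflexivity.
  - rewrite IHa, gmul_assoc. reflexivity.
Qed.

Lemma gpow_commute (G : Group) (h : G) a b :
  gmul G (gpow G h a) (gpow G h b) = gmul G (gpow G h b) (gpow G h a).
Proof. rewrite <- !gpow_add, Nat.add_comm. reflexivity. Qed.

Lemma divide_fact d L : 1 <= d -> d <= L -> Nat.divide d (fact L).
Proof.
  induction L; intros H1 H2; [lia|].
  destruct (Nat.eq_dec d (S L)) as [->|Hn].
  - exists (fact L). cbn [fact]. nia.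
  - destruct (IHL H1 ltac:(lia)) as [k Hk]. exists (S L * k).
    cbn [fact]. rewrite Hk. nia.
Qed.

Lemma pigeon {A : Type} (R : list A) (f : nat -> A) :
  (forall j, j <= length R -> In (f j) R) ->
  exists i j, i < j <= length R /\ f i = f j.
Proof.
  intro Hf. apply NNPP. intro Hno.
  assert (ND : NoDup (map f (seq 0 (S (length R))))).
  { apply NoDup_map_NoDup_ForallPairs; [|apply seq_NoDup].
    intros a b Ha Hb Eab. apply in_seq in Ha. apply in_seq in Hb.
    destruct (lt_eq_lt_dec a b) as [[Hlt|Heq]|Hlt]; auto.
    - exfalso. apply Hno. exists a, b. split; [lia|auto].
    - exfalso. apply Hno. exists b, a. split; [lia|auto]. }
  assert (Inc : incl (map f (seq 0 (S (length R)))) R).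
  { intros y Hy. apply in_map_iff in Hy. destruct Hy as [j [<- Hj]].
    apply in_seq in Hj. apply Hf. lia. }
  pose proof (NoDup_incl_length ND Inc). rewrite length_map, length_seq in H. lia.
Qed.

Theorem lemma5p1 (H : Group) (Hdiv : divisible H)
  (Heng : forall g : H, almost_right_Engel H g) :
  forall g x : H, exists N : nat, 0 < N /\
    forall n, N <= n -> comm H (ecomm H g x n) g = gone H.
Proof.
  intros g x. destruct (Heng g) as [R HR].
  destruct (Hdiv g (fact (length R)) (lt_O_fact _)) as [h Hh].
  assert (Bnd : forall L, exists B, forall j, j <= L -> forall n, B <= n ->
            In (ecomm H g (gconj H x (gpow H h j)) n) R).
  { induction L.
    - destruct (HR (gconj H x (gpow H h 0))) as [r [_ Hr]]. exists r.
      intros j Hj n Hn. replace j with 0 by lia. auto.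
    - destruct IHL as [B HB]. destruct (HR (gconj H x (gpow H h (S L)))) as [r [_ Hr]].
      exists (Nat.max B r). intros j Hj n Hn.
      destruct (Nat.eq_dec j (S L)) as [->|Hne]; [apply Hr; lia|apply HB; lia]. }
  destruct (Bnd (length R)) as [B HB].
  exists (S B). split; [lia|]. intros n Hn.
  set (c := ecomm H g x n).
  assert (Hgc : forall j, gconj H g (gpow H h j) = g).
  { intro j. apply gconj_id. rewrite <- Hh. apply gpow_commute. }
  assert (Hf : forall j, j <= length R -> In (gconj H c (gpow H h j)) R).
  { intros j Hj. unfold c. rewrite gconj_ecomm, Hgc. apply HB; lia. }
  destruct (pigeon R _ Hf) as [i [j [Hij E]]].
  assert (Hd : gconj H c (gpow H h (j - i)) = c).
  { apply (gconj_inj H _ _ (gpow H h i)).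
    rewrite gconj_conj, <- gpow_add. replace (j - i + i) with j by lia. auto. }
  assert (Hm : forall m, gconj H c (gpow H h ((j - i) * m)) = c).
  { induction m.
    - rewrite Nat.mul_0_r. simpl. unfold gconj. rewrite gmul_1r.
      rewrite <- (gmul_1r H (ginv H (gone H))), gmul_Vl, gmul_1l. reflexivity.
    - rewrite Nat.mul_succ_r, gpow_add, <- gconj_conj, IHm. exact Hd. }
  destruct (divide_fact (j - i) (length R) ltac:(lia) ltac:(lia)) as [k Hk].
  apply gconj_fix_comm. rewrite <- Hh, Hk, Nat.mul_comm. apply Hm.
Qed.
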